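(* Let $G$ be a trigraph with underlying simple graph $H$. If $\operatorname{stww}(G)>\Delta(G)^2$, then $\operatorname{tww}(G)=\operatorname{tww}(H)$.
   Context: A trigraph is a finite simple graph whose edges are each colored red or black; a graph is viewed as a trigraph with all edges black, and the underlying simple graph of a trigraph forgets the colors. $\Delta(G)$ denotes the maximum degree of the underlying graph. The red degree of a vertex is the number of red edges incident to it. For a partition $\mathcal{P}$ of $V(G)$, the quotient trigraph $G/\mathcal{P}$ has vertex set $\mathcal{P}$; two distinct parts $U,W$ are joined by a black edge if every pair $\{u,w\}$ with $u\in U,w\in W$ is a black edge of $G$, are non-adjacent if no such pair is an edge, and are joined by a red edge otherwise. A contraction sequence of an $n$-vertex trigraph $G$ is a sequence $\mathcal{P}_n,\dots,\mathcal{P}_1$ of partitions of $V(G)$ where $\mathcal{P}_n$ is the partition into singletons and each $\mathcal{P}_i$ arises from $\mathcal{P}_{i+1}$ by merging two parts; its width is the maximum red degree over all $G/\mathcal{P}_i$, and $\operatorname{tww}(G)$ is the minimum width of a contraction sequence. The sparse twin-width is $\operatorname{stww}(G)\coloneqq\operatorname{tww}(G_{\mathrm{red}})$, where $G_{\mathrm{red}}$ is obtained from $G$ by coloring all edges red. *)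

(* Defs.v *)
From mathcomp Require Import all_boot.
Set Implicit Arguments. Unset Strict Implicit. Unset Printing Implicit Defensive.

Section Trigraphs.
Variable V : finType.

(* A trigraph on vertex set V: [bl x y] = black edge, [rd x y] = red edge.
   Edges (of either colour) form a simple graph: symmetric, irreflexive,
   and each edge has exactly one colour. *)
Definition trigraph (bl rd : rel V) : Prop :=
  [/\ symmetric bl, symmetric rd, irreflexive bl, irreflexive rd
    & forall x y, ~~ (bl x y && rd x y)].

Definition adj (bl rd : rel V) : rel V := fun x y => bl x y || rd x y.

Definition Delta (bl rd : rel V) : nat :=
  \max_(x : V) #|[set y | adj bl rd x y]|.

(* the trigraph with all edges red, and the underlying graph (all black) *)
Definition red_bl (bl rd : rel V) : rel V := fun _ _ => false.
Definition red_rd (bl rd : rel V) : rel V := adj bl rd.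
Definition und_bl (bl rd : rel V) : rel V := adj bl rd.
Definition und_rd (bl rd : rel V) : rel V := fun _ _ => false.

(* quotient trigraph G/P: two distinct parts U, W are joined by a red edge
   unless all pairs are black edges or no pair is an edge *)
Definition all_black (bl rd : rel V) (U W : {set V}) : bool :=
  [forall u in U, forall w in W, bl u w].
Definition non_adj (bl rd : rel V) (U W : {set V}) : bool :=
  [forall u in U, forall w in W, ~~ adj bl rd u w].
Definition red_part (bl rd : rel V) (U W : {set V}) : bool :=
  ~~ all_black bl rd U W && ~~ non_adj bl rd U W.

Definition red_deg (bl rd : rel V) (P : {set {set V}}) (U : {set V}) : nat :=
  #|[set W in P | (W != U) && red_part bl rd U W]|.

Definition part_width (bl rd : rel V) (P : {set {set V}}) : nat :=
  \max_(U in P) red_deg bl rd P U.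

Definition singletons : {set {set V}} := [set [set x] | x : V].

Definition merge_step (P Q : {set {set V}}) : bool :=
  [exists U in P, exists W in P,
     (U != W) && (Q == (P :\ U :\ W) :|: [set U :|: W])].

(* a contraction sequence P_n, ..., P_1 (n = #|V|), listed from P_n *)
Definition contraction_seq (t : #|V|.-tuple {set {set V}}) : bool :=
  match tval t with
  | [::] => true
  | P :: s => (P == singletons) && path merge_step P s
  end.

Definition seq_width (bl rd : rel V) (t : #|V|.-tuple {set {set V}}) : nat :=
  \max_(P <- tval t) part_width bl rd P.

(* twin-width: minimum width over all contraction sequences.  The default
   #|V| of the minimum is harmless: every width is at most #|V| - 1 and
   contraction sequences always exist. *)
Definition tww (bl rd : rel V) : nat :=
  \big[minn/#|V|]_(t : #|V|.-tuple {set {set V}} | contraction_seq t)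
     seq_width bl rd t.

Definition stww (bl rd : rel V) : nat := tww (red_bl bl rd) (red_rd bl rd).

End Trigraphs.

(* Main.v *)
Require Import Defs.
From mathcomp Require Import all_boot.

Section Main.
Variable V : finType.
Variables bl rd : rel V.
Hypothesis tg : trigraph bl rd.

Local Notation D := (Delta bl rd).
Local Notation Gr := (red_bl bl rd).
Local Notation Rr := (red_rd bl rd).
Local Notation Gu := (und_bl bl rd).
Local Notation Ru := (und_rd bl rd).

Definition Aset (P : {set {set V}}) (U : {set V}) : {set {set V}} :=
  [set W in P | (W != U) && ~~ non_adj bl rd U W].

Lemma adj_sym : symmetric (adj bl rd).
Proof.
case: tg => sb sr _ _ _ x y; by rewrite /adj sb sr.
Qed.

Lemma non_adj_und U W : non_adj Gu Ru U W = non_adj bl rd U W.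
Proof.
rewrite /non_adj /adj /und_bl /und_rd.
apply: eq_forallb => u; congr (_ ==> _); apply: eq_forallb => w; congr (_ ==> _); by rewrite orbF.
Qed.

Lemma non_adj_red U W : non_adj Gr Rr U W = non_adj bl rd U W.
Proof.
rewrite /non_adj /adj /red_bl /red_rd.
apply: eq_forallb => u; congr (_ ==> _); apply: eq_forallb => w; congr (_ ==> _); by rewrite /adj.
Qed.

Lemma red_part_red U W : red_part Gr Rr U W = ~~ non_adj bl rd U W.
Proof.
rewrite /red_part non_adj_red.
case: (boolP (non_adj bl rd U W)) => [_|]; first by rewrite andbF.
move=> /forallPn [u] /=; rewrite andbT.
rewrite negb_imply => /andP [uU] /forallPn [w] /=.
rewrite negb_imply negbK => /andP [wW _].
apply/negP => /forallP /(_ u) /implyP /(_ uU) /forallP /(_ w) /implyP /(_ wW).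
by [].
Qed.

Lemma all_black_full U W : all_black bl rd U W -> all_black Gu Ru U W.
Proof.
move=> /forallP H; apply/forallP => u; apply/implyP => uU.
apply/forallP => w; apply/implyP => wW.
move: (H u) => /implyP /(_ uU) /forallP /(_ w) /implyP /(_ wW).
by rewrite /und_bl /adj => ->.
Qed.

Lemma red_part_und_G U W : red_part Gu Ru U W -> red_part bl rd U W.
Proof.
rewrite /red_part non_adj_und => /andP [H1 ->]; rewrite andbT.
apply: contra H1; exact: all_black_full.
Qed.

Lemma red_part_G_adj U W : red_part bl rd U W -> ~~ non_adj bl rd U W.
Proof. by case/andP. Qed.

Lemma red_part_und_adj U W : red_part Gu Ru U W -> ~~ non_adj bl rd U W.
Proof. by case/andP => _; rewrite non_adj_und. Qed.

Lemma full_bound P U W0 : trivIset P -> W0 \in Aset P U ->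
  all_black Gu Ru U W0 -> #|Aset P U| <= D ^ 2.
Proof.
move=> tP; rewrite inE => /andP [W0P /andP [_ nn]] full.
have [w0 w0W0] : exists w0, w0 \in W0.
  move: nn => /forallPn [u] /=; rewrite negb_imply => /andP [_] /forallPn [w] /=.
  rewrite negb_imply => /andP [wW _]; by exists w.
have UN : U \subset [set y | adj bl rd w0 y].
  apply/subsetP => u uU; rewrite inE adj_sym.
  move: full => /forallP /(_ u) /implyP /(_ uU) /forallP /(_ w0) /implyP /(_ w0W0).
  by rewrite /und_bl.
have cU : #|U| <= D.
  apply: leq_trans (subset_leq_card UN) _.
  exact: (leq_bigmax (F := fun x => #|[set y | adj bl rd x y]|)).
pose Qs := [set [set y | adj bl rd u y] | u in U].
have AS : Aset P U \subset pblock P @: cover Qs.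
  apply/subsetP => W; rewrite inE => /andP [WP /andP [_]].
  move=> /forallPn [u] /=; rewrite negb_imply => /andP [uU] /forallPn [w] /=.
  rewrite negb_imply negbK => /andP [wW auw].
  apply/imsetP; exists w; last by rewrite (def_pblock tP WP wW).
  apply/bigcupP; exists [set y | adj bl rd u y]; last by rewrite inE.
  by apply/imsetP; exists u.
apply: leq_trans (subset_leq_card AS) _.
apply: leq_trans (leq_imset_card _ _) _.
apply: leq_trans (leq_card_cover Qs).1 _.
have -> : D ^ 2 = D * D by rewrite expnS expn1.
apply: leq_trans (_ : \sum_(B in Qs) D <= _).
  apply: leq_sum => B /imsetP [u _ ->].
  exact: (leq_bigmax (F := fun x => #|[set y | adj bl rd x y]|)).
rewrite sum_nat_const; apply: leq_mul => //.
exact: leq_trans (leq_imset_card _ _) cU.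
Qed.

Lemma red_deg_red P U : red_deg Gr Rr P U = #|Aset P U|.
Proof. by rewrite /red_deg /Aset; apply: eq_card => W; rewrite !inE red_part_red. Qed.

Lemma red_deg_HG P U : red_deg Gu Ru P U <= red_deg bl rd P U.
Proof.
apply: subset_leq_card; apply/subsetP => W; rewrite !inE.
case/andP => -> /andP [-> /red_part_und_G] //.
Qed.

Lemma red_deg_main P U : trivIset P ->
  red_deg bl rd P U <= maxn (red_deg Gu Ru P U) (D ^ 2) /\
  (D ^ 2 < #|Aset P U| -> red_deg Gu Ru P U = #|Aset P U|).
Proof.
move=> tP.
case: (boolP [exists W in Aset P U, all_black Gu Ru U W]).
  move=> /existsP [W /andP [WA fu]]; have b := @full_bound _ _ _ tP WA fu.
  split; last by rewrite ltnNge b.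
  apply: leq_trans (leq_maxr _ _); apply: leq_trans b.
  apply: subset_leq_card; apply/subsetP => X; rewrite !inE.
  by case/andP => -> /andP [-> /red_part_G_adj].
move=> NE.
have eG : [set W in P | (W != U) && red_part bl rd U W] = Aset P U.
  apply/setP => W; rewrite !inE; case WP: (W \in P) => //=.
  case WU: (W == U) => //=.
  rewrite /red_part; case na: (non_adj bl rd U W); rewrite ?andbF ?andbT //=.
  apply/negP => ab; move/negP: NE; apply; apply/existsP; exists W.
  by rewrite !inE WP WU na /= (@all_black_full _ _ ab).
have eH : [set W in P | (W != U) && red_part Gu Ru U W] = Aset P U.
  apply/setP => W; rewrite !inE; case WP: (W \in P) => //=.
  case WU: (W == U) => //=.
  rewrite /red_part non_adj_und; case na: (non_adj bl rd U W); rewrite ?andbF ?andbT //=.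
  apply/negP => ab; move/negP: NE; apply; apply/existsP; exists W.
  by rewrite !inE WP WU na /= ab.
rewrite /red_deg eG eH; split => //; exact: leq_maxl.
Qed.

Lemma pw_le P : trivIset P -> part_width bl rd P <= maxn (part_width Gu Ru P) (D ^ 2).
Proof.
move=> tP; apply/bigmax_leqP => U UP.
apply: leq_trans (red_deg_main P U tP).1 _.
rewrite geq_max leq_maxr andbT; apply: leq_trans _ (leq_maxl _ _).
exact: (leq_bigmax_cond (F := fun U => red_deg Gu Ru P U)).
Qed.

Lemma pw_ge P : part_width Gu Ru P <= part_width bl rd P.
Proof.
apply/bigmax_leqP => U UP; apply: leq_trans (red_deg_HG P U) _.
exact: (leq_bigmax_cond (F := fun U => red_deg bl rd P U)).
Qed.

Lemma pw_big P U : trivIset P -> U \in P -> D ^ 2 < red_deg Gr Rr P U ->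
  D ^ 2 < part_width Gu Ru P.
Proof.
move=> tP UP; rewrite red_deg_red => h.
have e := (red_deg_main P U tP).2 h.
apply: leq_trans h _; rewrite -e.
exact: (leq_bigmax_cond (F := fun U => red_deg Gu Ru P U)).
Qed.

Lemma triv_single : trivIset (singletons V).
Proof.
apply/trivIsetP => A B /imsetP [x _ ->] /imsetP [y _ ->] neq.
rewrite disjoints1 in_set1; apply: contra neq => /eqP -> //.
Qed.

Lemma triv_merge (P Q : {set {set V}}) : trivIset P -> merge_step P Q -> trivIset Q.
Proof.
move=> tP /existsP [U /andP [UP /existsP [W /andP [WP /andP [neq /eqP ->]]]]].
rewrite setUC; apply: trivIsetU; first exact: trivIset1.
  apply: trivIsetS tP; apply/subsetP => X; rewrite !inE; by case/and3P.
rewrite /cover big_set1.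
rewrite disjoint_subset; apply/subsetP => x xUW; rewrite inE.
apply/bigcupP => [[B]]; rewrite !inE => /and3P [BW BU BP] xB.
move/trivIsetP: tP => tP.
case/setUP: xUW => xX.
  by rewrite (disjointFl (tP B U BP UP BU) xX) in xB.
by rewrite (disjointFl (tP B W BP WP BW) xX) in xB.
Qed.

Lemma triv_seq (t : #|V|.-tuple {set {set V}}) : contraction_seq t ->
  forall Q, Q \in tval t -> trivIset Q.
Proof.
rewrite /contraction_seq; case: t => [[|P s] /= _] //.
move=> /andP [/eqP eP pth].
have tP : trivIset P by rewrite eP; exact: triv_single.
clear eP; elim: s P pth tP => [|R s IH] P0 /=.
  by move=> _ tP Q; rewrite inE => /eqP ->.
move=> /andP [m pth] tP Q; rewrite inE => /orP [/eqP -> //| QR].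
exact: (IH R pth (@triv_merge _ _ tP m) Q QR).
Qed.

Lemma bigmin_le (I : eqType) (r : seq I) (Pr : pred I) (F : I -> nat) idx j :
  j \in r -> Pr j -> \big[minn/idx]_(i <- r | Pr i) F i <= F j.
Proof.
elim: r => [//|x r IH]; rewrite inE big_cons => /orP [/eqP <- -> | jr Pj].
  exact: geq_minl.
case: (Pr x); last exact: IH.
by apply: leq_trans (geq_minr _ _) (IH jr Pj).
Qed.

Lemma main_sec : D ^ 2 < stww bl rd -> tww bl rd = tww Gu Ru.
Proof.
move=> hD; rewrite /tww; apply: eq_bigr => t ct.
have sr : stww bl rd <= seq_width Gr Rr t.
  by rewrite /stww /tww; apply: bigmin_le => //; rewrite mem_index_enum.
have big : D ^ 2 < seq_width Gu Ru t.
  have := leq_trans hD sr.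
  rewrite /seq_width ltnNge => /negP NP; rewrite ltnNge; apply/negP => /bigmax_leqP_seq H.
  apply: NP; apply/bigmax_leqP_seq => P Pin _.
  apply/bigmax_leqP => U UP; rewrite leqNgt; apply/negP => hU.
  have := @pw_big _ _ (@triv_seq _ ct _ Pin) UP hU.
  by rewrite ltnNge (H P Pin isT).
apply/eqP; rewrite eqn_leq; apply/andP; split.
  apply/bigmax_leqP_seq => P Pin _.
  apply: leq_trans (@pw_le _ (@triv_seq _ ct _ Pin)) _.
  rewrite geq_max (ltnW big) andbT.
  exact: (leq_bigmax_seq (F := fun P => part_width Gu Ru P)).
apply/bigmax_leqP_seq => P Pin _; apply: leq_trans (pw_ge P) _.
exact: (leq_bigmax_seq (F := fun P => part_width bl rd P)).
Qed.

End Main.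

Theorem mainTheorem11 (V : finType) (bl rd : rel V) :
  trigraph bl rd ->
  Delta bl rd ^ 2 < stww bl rd ->
  tww bl rd = tww (und_bl bl rd) (und_rd bl rd).
Proof. move=> tg; exact: main_sec tg. Qed.
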